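(* For infinitely many $n\in\mathbb{N}$ there exist matroids $M=(E,\mathcal{I})$ and $M'=(E,\mathcal{I}')$ over the same ground set $E$ with $|E|=n$, and a weight function $w:E\to\{0,1\}$, together with a vertex $x^*$ of the polytope $\{x: x\in P_B(M)\cap P_B(M'),\ w^{\mathsf T}x=1\}$, such that there is a unique common basis $B$ of $M$ and $M'$ with $w(B)=1$, and this $B$ satisfies $\|x^*-\chi(B)\|_1=\tfrac34 n$.
   Context: $P_B(M)$ denotes the base polytope of $M$ (convex hull of characteristic vectors of bases of $M$) in $\mathbb{R}^E$; $\chi(B)$ is the characteristic vector of $B$; $w(S)=\sum_{e\in S}w(e)$; a common basis is a set that is a basis of both matroids. *)

(* Defs.v *)
From HB Require Import structures.
From mathcomp Require Import all_boot all_order all_algebra.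
From mathcomp Require Import reals.
Set Implicit Arguments. Unset Strict Implicit. Unset Printing Implicit Defensive.
Import Order.TTheory GRing.Theory Num.Theory.
Local Open Scope ring_scope.

Definition is_matroid (T : finType) (I : {set {set T}}) : Prop :=
  [/\ set0 \in I,
      (forall A B : {set T}, B \in I -> A \subset B -> A \in I) &
      (forall A B : {set T}, A \in I -> B \in I -> (#|A| < #|B|)%N ->
          exists2 e, e \in B :\: A & e |: A \in I)].

Definition is_basis (T : finType) (I : {set {set T}}) (B : {set T}) : Prop :=
  B \in I /\ (forall A : {set T}, A \in I -> B \subset A -> A = B).

Definition common_basis (T : finType) (I I' : {set {set T}}) (B : {set T}) :=
  is_basis I B /\ is_basis I' B.

Definition chi (R : realType) (T : finType) (B : {set T}) : T -> R :=
  fun e => if e \in B then 1 else 0.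

Definition wset (T : finType) (w : T -> nat) (S : {set T}) : nat :=
  (\sum_(e in S) w e)%N.

Definition in_base_polytope (R : realType) (T : finType) (I : {set {set T}})
  (x : T -> R) : Prop :=
  exists lam : {set T} -> R,
    [/\ forall S, 0 <= lam S,
        forall S, ~ is_basis I S -> lam S = 0,
        \sum_(S : {set T}) lam S = 1 &
        forall e, x e = \sum_(S : {set T}) lam S * chi R S e].

Definition in_Q (R : realType) (T : finType) (I I' : {set {set T}})
  (w : T -> nat) (x : T -> R) : Prop :=
  [/\ in_base_polytope I x, in_base_polytope I' x &
      \sum_(e : T) (w e)%:R * x e = 1].

Definition is_vertex (R : realType) (T : finType) (P : (T -> R) -> Prop)
  (x : T -> R) : Prop :=
  P x /\ (forall (y z : T -> R) (t : R), P y -> P z -> 0 < t < 1 ->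
            (forall e, x e = t * y e + (1 - t) * z e) -> y = z).

Definition l1dist (R : realType) (T : finType) (x y : T -> R) : R :=
  \sum_(e : T) `|x e - y e|.

(* Main.v *)
Require Import Defs.
From HB Require Import structures.
From mathcomp Require Import all_boot all_order all_algebra.
From mathcomp Require Import reals.
From mathcomp Require Import zify lra.
From Stdlib Require Import Classical FunctionalExtensionality.
Set Implicit Arguments. Unset Strict Implicit. Unset Printing Implicit Defensive.
Import Order.TTheory GRing.Theory Num.Theory.
Local Open Scope ring_scope.

Definition pairI (T : finType) (q : T -> T) : {set {set T}} :=
  [set A : {set T} | [forall e, (e \in A) ==> (q e \notin A)]].

Lemma pairIP (T : finType) (q : T -> T) (A : {set T}) :
  reflect (forall e, e \in A -> q e \notin A) (A \in pairI q).
Proof.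
rewrite inE; apply: (iffP forallP) => H e.
  by move=> eA; exact: (implyP (H e) eA).
by apply/implyP; exact: H.
Qed.

Lemma pair_matroid (T : finType) (q : T -> T) :
  involutive q -> (forall e, q e != e) -> is_matroid (pairI q).
Proof.
move=> qK qn; split.
- by apply/pairIP => e; rewrite inE.
- move=> A B /pairIP HB sAB; apply/pairIP => e eA; apply/negP => qA.
  by move: (HB e (subsetP sAB _ eA)); rewrite (subsetP sAB _ qA).
- move=> A B /pairIP HA /pairIP HB ltAB.
  case: (boolP [exists e, (e \in B :\: A) && (q e \notin A)]).
    case/existsP => e /andP [eBA qeA]; exists e => //.
    apply/pairIP => f; rewrite !inE => /orP [/eqP -> | fA].
      by rewrite negb_or qn.
    rewrite negb_or (HA f fA) andbT; apply/eqP => qfe.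
    by move: qeA; rewrite -qfe qK fA.
  move=> /existsPn H.
  have H' : forall e, e \in B -> (e \in A) || (q e \in A).
    by move=> e eB; move: (H e); rewrite !inE eB andbT negb_and !negbK.
  pose g e := if e \in A then e else q e.
  have inj : {in B &, injective g}.
    move=> e1 e2 e1B e2B; rewrite /g.
    case: ifP => e1A; case: ifP => e2A.
    + by [].
    + move=> E; move: (HB e2 e2B); by rewrite -E e1B.
    + move=> E; move: (HB e1 e1B); by rewrite E e2B.
    + by move=> E; rewrite -(qK e1) E qK.
  have sub : g @: B \subset A.
    apply/subsetP => y /imsetP [e eB ->]; rewrite /g.
    case: ifP => // eA; by move: (H' e eB); rewrite eA.
  move: (subset_leq_card sub); rewrite card_in_imset // => le.
  by move: ltAB; rewrite ltnNge le.
Qed.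

Lemma pair_basis (T : finType) (q : T -> T) (S : {set T}) :
  involutive q -> (forall e, (e \in S) = (q e \notin S)) -> is_basis (pairI q) S.
Proof.
move=> qK HS; split.
  by apply/pairIP => e; rewrite (HS e).
move=> A /pairIP HA sSA; apply/eqP; rewrite eqEsubset sSA andbT.
apply/subsetP => a aA; rewrite HS; apply/negP => qS.
by move: (HA a aA); rewrite (subsetP sSA _ qS).
Qed.

Lemma pair_basis_inv (T : finType) (q : T -> T) (S : {set T}) :
  involutive q -> (forall e, q e != e) ->
  is_basis (pairI q) S -> forall e, (e \in S) = (q e \notin S).
Proof.
move=> qK qn [/pairIP HS Hmax] e.
case: (boolP (e \in S)) => eS; first by rewrite HS.
apply/esym/negP => /negP qS.
have Ind : e |: S \in pairI q.
  apply/pairIP => f; rewrite !inE => /orP [/eqP -> | fS].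
    by rewrite negb_or qn.
  rewrite negb_or (HS f fS) andbT; apply/eqP => qfe.
  by move: qS; rewrite -qfe qK fS.
have := Hmax _ Ind (subsetUr _ _) => E.
by move: eS; rewrite -E setU11.
Qed.

Lemma chi_ge0 (R : realType) (T : finType) (S : {set T}) e : 0 <= chi R S e.
Proof. by rewrite /chi; case: ifP. Qed.

Lemma poly_pair (R : realType) (T : finType) (q : T -> T) (x : T -> R) :
  involutive q -> (forall e, q e != e) ->
  in_base_polytope (pairI q) x ->
  (forall e, 0 <= x e) /\ (forall e, x e + x (q e) = 1).
Proof.
move=> qK qn [lam [h0 hb h1 hx]]; split.
  move=> e; rewrite hx; apply: sumr_ge0 => S _; apply: mulr_ge0 => //.
  exact: chi_ge0.
move=> e; rewrite !hx -big_split /= -h1; apply: eq_bigr => S _.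
rewrite -mulrDr; case: (classic (is_basis (pairI q) S)) => b.
  rewrite /chi (pair_basis_inv qK qn b e).
  by case: (q e \in S); rewrite /= ?add0r ?addr0 mulr1.
by rewrite hb // !mul0r.
Qed.

Lemma poly_mid (R : realType) (T : finType) (I : {set {set T}}) S1 S2 (x : T -> R) :
  is_basis I S1 -> is_basis I S2 -> S1 != S2 ->
  (forall e, x e = 2^-1 * chi R S1 e + 2^-1 * chi R S2 e) -> in_base_polytope I x.
Proof.
move=> b1 b2 n12 hx.
exists (fun S => if S == S1 then 2^-1 else if S == S2 then 2^-1 else 0); split.
- by move=> S; case: ifP => _; [|case: ifP => _]; rewrite ?invr_ge0 ?ler0n.
- move=> S nb; case: eqP => [ES|_]; first by subst.
  by case: eqP => [ES|_]; first by subst.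
- have n21 : S2 != S1 by rewrite eq_sym.
  rewrite (bigD1 S1) //= eqxx (bigD1 S2) //= eqxx (negbTE n21).
  rewrite big1 => [|S /andP [/negbTE -> /negbTE ->] //].
  rewrite addr0; lra.
- move=> e; have n21 : S2 != S1 by rewrite eq_sym.
  rewrite hx (bigD1 S1) //= eqxx (bigD1 S2) //= eqxx (negbTE n21).
  rewrite big1 => [|S /andP [/negbTE -> /negbTE ->]]; last by rewrite mul0r.
  by rewrite addr0.
Qed.


Lemma oddE m : odd m = (m %% 2 == 1)%N. Proof. by rewrite modn2; case: odd. Qed.
Definition q1n k i := if i == 0 then (2*k).-1 else if i == (2*k).-1 then 0
  else if i == 2*k then (4*k).-1 else if i == (4*k).-1 then 2*k
  else if odd i then i.+1 else i.-1.
Definition q2n (i : nat) := if odd i then i.-1 else i.+1.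

Ltac qsolve := rewrite ?/q1n ?/q2n !oddE; repeat case: ifP; move=> *; lia.

Lemma q1n_lt k i : (i < 4*k)%N -> (q1n k i < 4*k)%N. Proof. qsolve. Qed.
Lemma q1nK k i : (i < 4*k)%N -> q1n k (q1n k i) = i. Proof. qsolve. Qed.
Lemma q1n_odd k i : (i < 4*k)%N -> odd (q1n k i) = ~~ odd i. Proof. qsolve. Qed.
Lemma q1n_side k i : (i < 4*k)%N -> (q1n k i < 2*k)%N = (i < 2*k)%N. Proof. qsolve. Qed.
Lemma q1n_neq k i : (i < 4*k)%N -> q1n k i != i. Proof. qsolve. Qed.
Lemma q1n_step k i : (i.+1 < 4*k)%N -> odd i -> i.+1 != 2*k -> q1n k i = i.+1.
Proof. qsolve. Qed.
Lemma q2n_lt k i : (i < 4*k)%N -> (q2n i < 4*k)%N. Proof. qsolve. Qed.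
Lemma q2nK i : q2n (q2n i) = i. Proof. qsolve. Qed.
Lemma q2n_odd i : odd (q2n i) = ~~ odd i. Proof. qsolve. Qed.
Lemma q2n_side k i : (q2n i < 2*k)%N = (i < 2*k)%N. Proof. qsolve. Qed.
Lemma q2n_neq i : q2n i != i. Proof. qsolve. Qed.
Lemma q2n_step i : ~~ odd i -> q2n i = i.+1. Proof. qsolve. Qed.

Definition q1 k (e : 'I_(4*k)) : 'I_(4*k) := Ordinal (q1n_lt (ltn_ord e)).
Definition q2 k (e : 'I_(4*k)) : 'I_(4*k) := Ordinal (q2n_lt (ltn_ord e)).
Lemma q1K k : involutive (@q1 k).
Proof. by move=> e; apply: val_inj; rewrite /= q1nK. Qed.
Lemma q2K k : involutive (@q2 k).
Proof. by move=> e; apply: val_inj; rewrite /= q2nK. Qed.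
Lemma q1_neq k (e : 'I_(4*k)) : q1 e != e.
Proof. by rewrite -val_eqE /= q1n_neq. Qed.
Lemma q2_neq k (e : 'I_(4*k)) : q2 e != e.
Proof. by rewrite -val_eqE /= q2n_neq. Qed.

Lemma alt (R : realType) k (u : 'I_(4*k) -> R) :
  (forall e, u e + u (q1 e) = 1) -> (forall e, u e + u (q2 e) = 1) ->
  forall e f : 'I_(4*k), val f = (if (val e < 2*k)%N then 0 else 2*k)%N ->
  u e = if odd e then 1 - u f else u f.
Proof.
move=> H1 H2.
suff: forall m (e f : 'I_(4*k)), val e = m ->
  val f = (if (m < 2*k)%N then 0 else 2*k)%N -> u e = if odd e then 1 - u f else u f.
  by move=> H e f; apply: H.
elim=> [|m IH] e f em fm.
  have k0 : (0 < 2 * k)%N by move: (ltn_ord e); rewrite em; lia.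
  move: fm; rewrite k0 => fm; have -> : e = f by apply: val_inj; rewrite em fm.
  by rewrite fm.
case: (eqVneq m.+1 (2*k)) => [E|nE].
  move: fm; rewrite E ltnn => fm; have -> : e = f by apply: val_inj; rewrite em fm.
  by rewrite fm oddM.
have lm : (m < 4*k)%N by move: (ltn_ord e); rewrite em; lia.
pose g : 'I_(4*k) := Ordinal lm.
have fm' : val f = (if (m < 2*k)%N then 0 else 2*k)%N.
  by rewrite fm; congr (if _ then _ else _); move: nE; lia.
have IHg := IH g f erefl fm'.
have lm1 : (m.+1 < 4*k)%N by move: (ltn_ord e); rewrite em.
have Hge : u g + u e = 1.
  case: (boolP (odd m)) => om.
    have -> : e = q1 g by apply: val_inj; rewrite /= q1n_step.
    exact: H1.
  have -> : e = q2 g by apply: val_inj; rewrite /= q2n_step.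
  exact: H2.
rewrite em /= IHg in Hge *; case: (odd m) Hge => /= Hge; lra.
Qed.


Lemma main (R : realType) (k : nat) : (1 < k)%N ->
  exists (I I' : {set {set 'I_(4*k)}}) (w : 'I_(4*k) -> nat) (xs : 'I_(4*k) -> R),
      [/\ is_matroid I, is_matroid I',
          (forall e, (w e <= 1)%N),
          is_vertex (in_Q I I' w) xs &
          exists B : {set 'I_(4*k)},
            [/\ common_basis I I' B, wset w B = 1%N,
                (forall B' : {set 'I_(4*k)}, common_basis I I' B' -> wset w B' = 1%N -> B' = B) &
                l1dist xs (chi R B) = 3%:R * (4*k)%:R / 4%:R]].
Proof.
move=> hk.
have K1 := @q1K k; have K2 := @q2K k; have N1 := @q1_neq k; have N2 := @q2_neq k.
have h0 : (0 < 4*k)%N by lia.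
have h1 : (1 < 4*k)%N by lia.
have h3 : (3 < 4*k)%N by lia.
have h2k : (2*k < 4*k)%N by lia.
have h5 : (2*k+1 < 4*k)%N by lia.
pose c0 := Ordinal h0; pose c1 := Ordinal h2k.
pose o1 := Ordinal h1; pose o3 := Ordinal h3; pose o5 := Ordinal h5.
pose w (e : 'I_(4*k)) : nat := [|| val e == 1, val e == 3 | val e == 2*k+1]%N.
pose S (f0 f1 : bool) := [set e : 'I_(4*k) | odd e == (if (val e < 2*k)%N then f0 else f1)].
pose I := pairI (@q1 k); pose I' := pairI (@q2 k).
have Sb : forall f0 f1, common_basis I I' (S f0 f1).
  move=> f0 f1; split; apply: pair_basis => // e; rewrite !inE /=.
    rewrite q1n_odd // q1n_side //.
    by case: odd; case: (_ < _)%N; case: f0; case: f1.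
  rewrite q2n_odd // q2n_side //.
  by case: odd; case: (_ < _)%N; case: f0; case: f1.
pose xs (e : 'I_(4*k)) : R := if (val e < 2*k)%N then 2^-1 else if odd e then 0 else 1.
have base : forall e : 'I_(4*k), val (if (val e < 2*k)%N then c0 else c1) = (if (val e < 2*k)%N then 0 else 2*k)%N.
  by move=> e; case: ifP.
have cons : forall u : 'I_(4*k) -> R, in_Q I I' w u -> [/\ (forall e, 0 <= u e),
     (forall e, u e + u (q1 e) = 1) & (forall e, u e + u (q2 e) = 1)].
  move=> u [p1 p2 _].
  have [g1 e1] := poly_pair K1 N1 p1; have [_ e2] := poly_pair K2 N2 p2.
  by split.
have altE : forall u : 'I_(4*k) -> R, (forall e, u e + u (q1 e) = 1) ->
    (forall e, u e + u (q2 e) = 1) -> forall e,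
    u e = if odd e then 1 - u (if (val e < 2*k)%N then c0 else c1)
          else u (if (val e < 2*k)%N then c0 else c1).
  by move=> u H1 H2 e; apply: alt H1 H2 e _ (base e).
have wo1 : w o1 = 1%N by [].
have wo3 : w o3 = 1%N by [].
have wo5 : w o5 = 1%N by rewrite /w /= eqxx !orbT.
have wsum : forall u : 'I_(4*k) -> R, (forall e, u e + u (q1 e) = 1) ->
    (forall e, u e + u (q2 e) = 1) ->
    \sum_e (w e)%:R * u e = (1 - u c0) + (1 - u c0) + (1 - u c1).
  move=> u H1 H2.
  rewrite (bigD1 o1) //= (bigD1 o3) //=.
  rewrite (bigD1 o5) /=; last by apply/andP; split; rewrite -val_eqE /=; lia.
  rewrite big1 => [|e /andP [/andP [n1 n3] n5]]; last first.
    rewrite -!val_eqE /= in n1 n3 n5.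
    by rewrite /w (negbTE n1) (negbTE n3) (negbTE n5) mul0r.
  rewrite wo1 wo3 wo5 !mul1r addr0 (altE u H1 H2 o1) (altE u H1 H2 o3).
  rewrite (altE u H1 H2 o5) /=.
  have -> : (1 < 2*k)%N by lia.
  have -> : (3 < 2*k)%N by lia.
  have -> : (2*k+1 < 2*k)%N = false by lia.
  rewrite oddD oddM /=; lra.
have wsetR : forall S0, ((wset w S0)%:R : R) = \sum_e (w e)%:R * chi R S0 e.
  move=> S0; rewrite /wset natr_sum big_mkcond /=; apply: eq_bigr => e _.
  by rewrite /chi; case: ifP => _; rewrite ?mulr1 ?mulr0.
have chicons : forall B', common_basis I I' B' ->
    (forall e, chi R B' e + chi R B' (q1 e) = 1) /\
    (forall e, chi R B' e + chi R B' (q2 e) = 1).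
  move=> B' [b1 b2]; split => e.
    by rewrite /chi (pair_basis_inv K1 N1 b1 e); case: (q1 e \in B'); rewrite ?addr0 ?add0r.
  by rewrite /chi (pair_basis_inv K2 N2 b2 e); case: (q2 e \in B'); rewrite ?addr0 ?add0r.
have xsQ : in_Q I I' w xs.
  have n12 : S false false != S true false.
    apply/eqP => E; have : c0 \in S false false by rewrite inE /=; case: ifP.
    by rewrite E inE /= (_ : (0 < 2*k)%N) //; lia.
  have hx : forall e, xs e = 2^-1 * chi R (S false false) e + 2^-1 * chi R (S true false) e.
    move=> e; rewrite /xs /chi !inE; case: (val e < 2*k)%N; case: odd => /=; lra.
  have p1 : in_base_polytope I xs.
    by apply: (poly_mid _ _ n12 hx); [case: (Sb false false) | case: (Sb true false)].
  have p2 : in_base_polytope I' xs.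
    by apply: (poly_mid _ _ n12 hx); [case: (Sb false false) | case: (Sb true false)].
  split => //.
  have [_ H1] := poly_pair K1 N1 p1; have [_ H2'] := poly_pair K2 N2 p2.
  rewrite (wsum xs H1 H2') /xs /= (_ : (0 < 2*k)%N) ?ltnn; last lia.
  rewrite oddM /=; lra.
have xsc : xs c0 = 2^-1 /\ xs c1 = 1.
  rewrite /xs /= (_ : (0 < 2*k)%N) ?ltnn ?oddM //; lia.
exists I, I', w, xs; split.
- exact: pair_matroid K1 N1.
- exact: pair_matroid K2 N2.
- by move=> e; exact: leq_b1.
- split => // y z t Hy Hz /andP [t0 t1] Hx.
  have [gy y1 y2] := cons y Hy; have [gz z1 z2] := cons z Hz.
  have wy := wsum y y1 y2; have wz := wsum z z1 z2.
  case: Hy => _ _; rewrite wy => {}wy.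
  case: Hz => _ _; rewrite wz => {}wz.
  have yle : y c1 <= 1 by have := y1 c1; have := gy (q1 c1); lra.
  have zle : z c1 <= 1 by have := z1 c1; have := gz (q1 c1); lra.
  have hx1 := Hx c1; rewrite (proj2 xsc) in hx1.
  have ey1 : y c1 = 1 by nra.
  have ez1 : z c1 = 1 by nra.
  have ey0 : y c0 = z c0 by lra.
  apply: functional_extensionality => e.
  rewrite (altE y y1 y2 e) (altE z z1 z2 e).
  by case: (val e < 2*k)%N; case: (odd e); rewrite ?ey0 ?ey1 ?ez1.
- have [bc1 bc2] := chicons _ (Sb false true).
  have chB0 : chi R (S false true) c0 = 1.
    by rewrite /chi inE /= (_ : (0 < 2*k)%N) //; lia.
  have chB1 : chi R (S false true) c1 = 0 by rewrite /chi inE /= ltnn oddM.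
  exists (S false true); split.
  + exact: Sb.
  + apply/eqP; rewrite -(pnatr_eq1 R) wsetR wsum // chB0 chB1; apply/eqP; lra.
  + move=> B' cb wB; have [g1 g2] := chicons _ cb.
    have W := wsum _ g1 g2; rewrite -wsetR wB mulr1n in W.
    have [a0 a1] : chi R B' c0 = 1 /\ chi R B' c1 = 0.
      move: W; rewrite /chi; case: (c0 \in B'); case: (c1 \in B') => W; split; lra.
    apply/setP => e.
    have E : chi R B' e = chi R (S false true) e.
      rewrite (altE _ g1 g2 e) (altE _ bc1 bc2 e).
      by case: (val e < 2*k)%N; rewrite ?a0 ?a1 ?chB0 ?chB1.
    move: E; rewrite /chi; case: (e \in B'); case: (e \in S false true) => // E;
      by have := @ltr01 R; rewrite E ltxx.
  + rewrite /l1dist.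
    have -> : \sum_e `|xs e - chi R (S false true) e| =
        \sum_(0 <= i < 4*k) (if (i < 2*k)%N then 2^-1 else 1 : R).
      rewrite big_mkord; apply: eq_bigr => e _.
      rewrite /xs /chi inE; case: (val e < 2*k)%N; case: (odd e) => /=;
        first [rewrite ger0_norm; lra | rewrite ler0_norm; lra].
    pose F := (fun i => if (i < 2*k)%N then 2^-1 else 1 : R).
    have -> : \sum_(0 <= i < 4*k) F i = \sum_(0 <= i < 2*k) F i + \sum_(2*k <= i < 4*k) F i.
      by apply: big_cat_nat; lia.
    have -> : \sum_(0 <= i < 2*k) F i = \sum_(0 <= i < 2*k) (2^-1 : R).
      by apply: eq_big_nat => i /andP [_ hi]; rewrite /F hi.
    have -> : \sum_(2*k <= i < 4*k) F i = \sum_(2*k <= i < 4*k) (1 : R).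
      by apply: eq_big_nat => i /andP [hi _]; rewrite /F ltnNge hi.
    rewrite !sumr_const_nat subn0 (_ : (4*k - 2*k = 2*k)%N); last lia.
    rewrite -mulr_natr !natrM; set K := (k%:R : R).
    lra.
Qed.

Theorem theorem20 (R : realType) :
  forall N : nat, exists n : nat, (N <= n)%N /\
    exists (I I' : {set {set 'I_n}}) (w : 'I_n -> nat) (xs : 'I_n -> R),
      [/\ is_matroid I, is_matroid I',
          (forall e, (w e <= 1)%N),
          is_vertex (in_Q I I' w) xs &
          exists B : {set 'I_n},
            [/\ common_basis I I' B, wset w B = 1%N,
                (forall B' : {set 'I_n}, common_basis I I' B' -> wset w B' = 1%N -> B' = B) &
                l1dist xs (chi R B) = 3%:R * n%:R / 4%:R]].
Proof.
move=> N; exists (4 * N.+2)%N; split; first lia.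
by apply: main.
Qed.
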